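(* Let $\boldsymbol\nu=\{\nu_t\}_{t>0}$ be a measurable factorizing family over $[0,1]\times\{\ast\}$. Fix $s,t>0$, set $u=\lambda(s+t)$, $u_1=\lambda s$, $u_2=\lambda t$, and assume that for all sufficiently small $u$: (A) under $\nu_u(\cdot\mid Z\neq\varnothing)$ the anchor $\alpha_u(Z)$ is uniform on $(0,u)$; (D) $\nu_u(\mathrm{diam}_u(Z)\ge u^2\mid Z\neq\varnothing)\le u$. Let $E_{10}=\{Z\cap[0,u_1]\neq\varnothing,\ Z\cap(u_1,u]=\varnothing\}$, $E_{01}=\{Z\cap[0,u_1]=\varnothing,\ Z\cap[u_1,u]\neq\varnothing\}$, $R_{0,u_1}(Z)=Z\cap[0,u_1]$, $R_{u_1,u}(Z)=(Z\cap[u_1,u])-u_1$; let $\widehat\nu_u^{10}$ be the law of $R_{0,u_1}(Z)$ under $\nu_u(\cdot\mid E_{10})$, $\widehat\nu_u^{01}$ the law of $R_{u_1,u}(Z)$ under $\nu_u(\cdot\mid E_{01})$, $\bar\nu_u^{(u_1)}$ the law of $R_{0,u_1}(Z)$ under $\nu_u(\cdot\mid R_{0,u_1}(Z)\neq\varnothing)$, and $\bar\nu_u^{(u_2)}$ the law of $R_{u_1,u}(Z)$ under $\nu_u(\cdot\mid R_{u_1,u}(Z)\neq\varnothing)$. Then there is $C_{s,t}<\infty$ such that for all sufficiently small $\lambda>0$, $\|\widehat\nu_u^{10}-\bar\nu_u^{(u_1)}\|_{\mathrm{TV}}\le C_{s,t}u$ and $\|\widehat\nu_u^{01}-\bar\nu_u^{(u_2)}\|_{\mathrm{TV}}\le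 C_{s,t}u$.
   Context: $\mathscr C_t^{\{\ast\}}$ is the space of closed subsets of $[0,t]$ with Borel $\sigma$-field $\Sigma_t$ of the Fell topology; $\oplus_{s,t}(Z_1,Z_2)=Z_1\cup(s+Z_2)$; $\sigma_t(Z)=\{r/t:r\in Z\}$. A measurable factorizing family over $[0,1]\times\{\ast\}$ is a family of probability measures $\nu_t$ on $\mathscr C_t^{\{\ast\}}$ with: (i) $\nu_{s+t}$ and $(\nu_s\otimes\nu_t)\circ\oplus_{s,t}^{-1}$ mutually absolutely continuous; (ii) $\nu_t(\{Z:r\in Z\})=0$ for all $r\in[0,t]$; (iii) no $\nu_t$ supported on finitely many atoms; (iv a) a countable ring $\mathcal R\subset\Sigma_1$ generating $\Sigma_1$ with $t\mapsto(\sigma_t)_*\nu_t(A)$ Borel for $A\in\mathcal R$; (iv b) a Borel $\Delta$ on $(0,\infty)^2\times\mathscr C_1^{\{\ast\}}$ with $\Delta(s,t,\sigma_{s+t}(Z))=d((\nu_s\otimes\nu_t)\circ\oplus_{s,t}^{-1})/d\nu_{s+t}(Z)$ a.e. Anchor: $\alpha_u(Z)=\inf Z$ ($0$ if empty); spread: $\mathrm{diam}_u(Z)=\sup Z-\inf Z$ ($0$ if empty). $\|\rho-\eta\|_{\mathrm{TV}}=\sup_A|\rho(A)-\eta(A)|$. *)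

(* Defs.v *)
From HB Require Import structures.
From mathcomp Require Import all_boot all_order all_algebra.
From mathcomp Require Import all_classical all_reals all_analysis.
From mathcomp Require Import measurable_realfun.
Unset Printing Implicit Defensive.
Import Order.TTheory GRing.Theory Num.Theory.
Import numFieldNormedType.Exports.
Local Open Scope classical_set_scope.
Local Open Scope ring_scope.

Section ClosedSubsets.
Context {R : realType}.

Definition is_Ct (t : R) (Z : set R) : Prop :=
  closed Z /\ Z `<=` [set x | 0 <= x <= t].

Lemma is_Ct0 (t : R) : is_Ct t set0.
Proof. by split; [exact: closed0 | exact: sub0set]. Qed.

Definition Ct0 (t : R) := {Z : set R | is_Ct t Z}.

HB.instance Definition _ t := gen_eqMixin (Ct0 t).
HB.instance Definition _ t := gen_choiceMixin (Ct0 t).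
HB.instance Definition _ t := isPointed.Build (Ct0 t) (exist _ set0 (is_Ct0 t)).

(* Subbase of the Fell topology on the closed subsets of X = [0,t]:
   {F | F ∩ K = ∅} for K compact in X, and {F | F ∩ V ≠ ∅} for V open in X
   (the open sets of X are the traces U ∩ [0,t] of open sets U of R). *)
Definition fell_subbase (t : R) : set (set (Ct0 t)) :=
  [set B | (exists K : set R, [/\ compact K, K `<=` [set x | 0 <= x <= t] &
              B = [set F : Ct0 t | proj1_sig F `&` K = set0]])
        \/ (exists U : set R, open U /\
              B = [set F : Ct0 t | proj1_sig F `&` (U `&` [set x | 0 <= x <= t]) !=set0])].

Definition fell_open (t : R) : set (set (Ct0 t)) :=
  [set O | forall F, O F -> exists (n : nat) (B : nat -> set (Ct0 t)),
      [/\ forall i, (i < n)%N -> fell_subbase t (B i),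
          forall i, (i < n)%N -> B i F &
          forall G, (forall i, (i < n)%N -> B i G) -> O G]].

Definition Ct (t : R) := g_sigma_algebraType (fell_open t).

Definition cval {t : R} (Z : Ct t) : set R := proj1_sig (Z : Ct0 t).

(* the element of C_t with underlying set Z (if Z is a closed subset of [0,t]);
   the empty set otherwise (only used on valid inputs) *)
Definition mkC (t : R) (Z : set R) : Ct t :=
  match pselect (is_Ct t Z) with
  | left h => exist _ Z h
  | right _ => exist _ set0 (is_Ct0 t)
  end.

Definition oplus (s t : R) (p : Ct s * Ct t) : Ct (s + t) :=
  mkC (s + t) (cval p.1 `|` [set s + r | r in cval p.2]).

Definition sigmat {t : R} (Z : Ct t) : Ct 1 :=
  mkC 1 [set r / t | r in cval Z].

Definition measurable_factorizing_family
    (nu : forall t : R, probability (Ct t) R) : Prop :=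
  [/\
      (forall s t : R, 0 < s -> 0 < t ->
         nu (s + t) `<< pushforward ((nu s) \x (nu t))%E (oplus s t) /\
         pushforward ((nu s) \x (nu t))%E (oplus s t) `<< nu (s + t)),
      (forall t : R, 0 < t -> forall r : R, 0 <= r <= t ->
         nu t [set Z : Ct t | cval Z r] = 0%E),
      (forall t : R, 0 < t ->
         ~ exists S : set (Ct t), finite_set S /\ nu t S = 1%E),
      (exists Rg : set (set (Ct 1)),
         [/\ countable Rg, setring Rg, Rg `<=` measurable,
             <<s Rg >> = measurable &
             forall A, Rg A ->
               measurable_fun [set t : R | 0 < t]
                 (fun t : R => nu t (@sigmat t @^-1` A))]) &
      (exists Delta : R * R * Ct 1 -> R,
         measurable_fun [set x : R * R * Ct 1 | 0 < x.1.1 /\ 0 < x.1.2] Delta /\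
         forall s t : R, 0 < s -> 0 < t -> forall A : set (Ct (s + t)),
           measurable A ->
           pushforward ((nu s) \x (nu t))%E (oplus s t) A =
           (\int[nu (s + t)%R]_(Z in A) (Delta (s, t, sigmat Z))%:E)%E)].

Definition anchor {t : R} (Z : Ct t) : R :=
  if pselect (cval Z = set0) then 0 else inf (cval Z).
Definition spread {t : R} (Z : Ct t) : R :=
  if pselect (cval Z = set0) then 0 else sup (cval Z) - inf (cval Z).

(* restrictions R_{0,u1} : C_u -> C_{u1} and R_{u1,u} : C_u -> C_{u2} (u2 = u - u1) *)
Definition restr0 (u1 u : R) (Z : Ct u) : Ct u1 :=
  mkC u1 (cval Z `&` [set x | 0 <= x <= u1]).
Definition restr1 (u1 u2 u : R) (Z : Ct u) : Ct u2 :=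
  mkC u2 [set r - u1 | r in cval Z `&` [set x | u1 <= x <= u]].

Definition nonemptyC (t : R) : set (Ct t) := [set Z | cval Z !=set0].
Definition E10 (u1 u : R) : set (Ct u) :=
  [set Z | cval Z `&` [set x | 0 <= x <= u1] !=set0 /\
           cval Z `&` [set x | u1 < x <= u] = set0].
Definition E01 (u1 u : R) : set (Ct u) :=
  [set Z | cval Z `&` [set x | 0 <= x <= u1] = set0 /\
           cval Z `&` [set x | u1 <= x <= u] !=set0].

End ClosedSubsets.

Section Conditioning.
Context {d : measure_display} {T : measurableType d} {R : realType}.

Definition condP (mu : set T -> \bar R) (E B : set T) : R :=
  fine (mu (E `&` B)) / fine (mu E).

Definition cond_law {d'} {T' : measurableType d'} (mu : set T -> \bar R)
    (E : set T) (f : T -> T') : set T' -> R :=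
  fun A => condP mu E (f @^-1` A).

End Conditioning.

Definition TV {d} {T : measurableType d} {R : realType} (rho eta : set T -> R) : R :=
  sup [set `|rho A - eta A| | A in (measurable : set (set T))].

(* Main.v *)
Require Import Defs.
From HB Require Import structures.
From mathcomp Require Import all_boot all_order all_algebra.
From mathcomp Require Import all_classical all_reals all_analysis.
From mathcomp Require Import measurable_realfun.
From mathcomp Require Import lra ring.
Import Order.TTheory GRing.Theory Num.Theory.
Import numFieldNormedType.Exports.
Local Open Scope classical_set_scope.
Local Open Scope ring_scope.

Section Aux.
Context {R : realType}.

Lemma cvalP {t : R} (Z : Ct t) : is_Ct t (cval Z).
Proof. exact: (proj2_sig (Z : Ct0 t)). Qed.

Lemma cval_sub {t : R} {Z : Ct t} {x : R} : cval Z x -> 0 <= x <= t.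
Proof. by move=> h; have [_ /(_ x h)] := cvalP Z. Qed.

Lemma mkCE (t : R) (Z : set R) : is_Ct t Z -> cval (mkC t Z) = Z.
Proof. by move=> h; rewrite /mkC; case: pselect. Qed.

Lemma fell_meas (t : R) (B : set (Ct t)) : fell_subbase t B -> measurable B.
Proof.
move=> hB; apply: sub_sigma_algebra => F BF.
exists 1%N, (fun _ => B); split => //.
by move=> G /(_ 0%N isT).
Qed.

Lemma Gc_meas (t : R) (K : set R) : closed K ->
  measurable [set Z : Ct t | cval Z `&` K = set0].
Proof.
move=> cK.
have -> : [set Z : Ct t | cval Z `&` K = set0] =
   [set Z : Ct t | proj1_sig Z `&` (`[0, t]%classic `&` K) = set0].
  apply/seteqP; split => Z /= h.
    apply/seteqP; split => // x [hx [_ hK]]; by rewrite -h.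
  apply/seteqP; split => // x [hx hK]; rewrite -h; split => //; split => //.
  by change (x \in `[0, t]); rewrite in_itv /=; exact: (cval_sub hx).
apply: fell_meas; left; exists (`[0, t]%classic `&` K); split.
- exact: compact_closedI (@segment_compact _ 0 t) cK.
- by move=> x [] /=; rewrite in_itv.
- by [].
Qed.

Lemma Io_meas (t : R) (C : set R) (a b : R) : closed C ->
  measurable [set Z : Ct t | cval Z `&` C `&` `]a, b[ !=set0].
Proof.
move=> cC.
have -> : [set Z : Ct t | cval Z `&` C `&` `]a, b[ !=set0] =
  \bigcup_n ~` [set Z : Ct t | cval Z `&` (C `&` `[a + n.+1%:R^-1, b - n.+1%:R^-1]) = set0].
  apply/seteqP; split => Z /=.
    move=> [x [[hZ hC]]]; rewrite /= in_itv /= => /andP[ax xb].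
    have hm : 0 < Num.min (x - a) (b - x) by rewrite lt_min !subr_gt0 ax xb.
    have [n] := ltr_add_invr hm; rewrite add0r lt_min => /andP[h1 h2].
    exists n => // h.
    have : (cval Z `&` (C `&` `[a + n.+1%:R^-1, b - n.+1%:R^-1])) x.
      split => //; split => //; rewrite /= in_itv /=; apply/andP; split.
        by rewrite -lerBrDl ltW.
      by rewrite lerBrDr -lerBrDl ltW.
    by rewrite h.
  move=> [n _ h].
  have /set0P [x [hZ [hC]]] : (cval Z `&` (C `&` `[a + n.+1%:R^-1, b - n.+1%:R^-1]) != set0) by apply/eqP.
  rewrite /= in_itv /= => /andP[h1 h2].
  exists x; split => //; rewrite /= in_itv /=; apply/andP; split.
    by apply: lt_le_trans h1; rewrite ltrDl invr_gt0 ltr0n.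
  have hp : 0 < n.+1%:R^-1 :> R by rewrite invr_gt0 ltr0n.
  move: hp h2; set e := (n.+1%:R^-1 : R) => hp h2; lra.
apply: bigcup_measurable => n _; apply: measurableC; apply: Gc_meas.
exact: closedI cC (@itv_closed _ _ _ _).
Qed.

End Aux.

Section Aux2.
Context {R : realType}.

Definition rball (p : rat * rat) : set R := ball (ratr p.1 : R) (ratr p.2 : R).

Lemma Kcase (F K : set R) : closed F -> compact K -> F `&` K = set0 ->
  exists s : seq (rat * rat), (forall p, p \in s -> F `&` rball p = set0) /\
    K `<=` [set x | exists2 p, p \in s & rball p x].
Proof.
move=> cF; rewrite compact_cover => cK FK.
have [|x Kx|D' sD' KD'] := cK (rat * rat)%type [set p | F `&` rball p = set0] rball.
- by move=> p _; exact: ball_open.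
- have nFx : (~` F) x by move=> Fx; have : (F `&` K) x by []; rewrite FK.
  have [c [r [xB BF]]] := open_subball_rat (closed_openC cF) (mem_set nFx).
  exists (c, r) => /=; last exact: set_mem xB.
  by apply/seteqP; split => // y [Fy /BF].
exists (finmap.enum_fset D'); split.
  move=> p pD; have := sD' p pD; rewrite inE; exact.
move=> x /KD' [p pD' px]; exists p => //.
Qed.

Lemma Ucase (U : set R) x : open U -> U x ->
  exists p : rat * rat, rball p x /\ rball p `<=` U.
Proof.
move=> oU Ux; have [c [r [xB BU]]] := open_subball_rat oU (mem_set Ux).
by exists (c, r); split => //; exact: set_mem xB.
Qed.


Definition Hb (w : R) (p : rat * rat) : set (Ct w) := [set G | cval G `&` rball p !=set0].
Definition basic (w : R) (q : seq (rat * rat) * seq (rat * rat)) : set (Ct w) :=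
  [set G | (forall p, p \in q.1 -> ~ Hb w p G) /\ (forall p, p \in q.2 -> Hb w p G)].

Lemma approx1 (w : R) (B : set (Ct w)) F : fell_subbase w B -> B F ->
  exists q, basic w q F /\ basic w q `<=` B.
Proof.
case=> [[K [cK _ ->]] | [U [oU ->]]] /= BF.
- have [s [sF Ks]] := @Kcase (cval F) K (cvalP F).1 cK BF.
  exists (s, [::]); split.
    split => //= p ps [x hx]; move: (sF p ps) => h.
    by have : (cval F `&` rball p) x by []; rewrite h.
  move=> G [hG _] /=; apply/seteqP; split => // x [Gx Kx].
  have [p ps px] := Ks x Kx.
  by apply: (hG p ps); exists x.
- case: BF => x [Fx [Ux _]].
  have [p [px pU]] := @Ucase U x oU Ux.
  exists ([::], [:: p]); split.
    split => //= p'; rewrite inE => /eqP ->; by exists x.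
  move=> G [_ hG]; have [y [Gy py]] := hG p (mem_head _ _).
  exists y; split => //; split; first exact: pU.
  exact: (cval_sub Gy).
Qed.

Lemma approx (w : R) (O : set (Ct w)) F : fell_open w O -> O F ->
  exists q, basic w q F /\ basic w q `<=` O.
Proof.
move=> hO OF; have [n [B [hB BF BO]]] := hO F OF.
suff : forall m, (m <= n)%N -> exists q, basic w q F /\
    forall G, basic w q G -> forall i, (i < m)%N -> B i G.
  move=> /(_ n (leqnn n)) [q [Fq hq]]; exists q; split => // G Gq.
  by apply: BO; exact: hq.
elim=> [|m IH] hm.
  by exists ([::], [::]); split => //.
have [q [Fq hq]] := IH (ltnW hm).
have [q' [Fq' hq']] := @approx1 w (B m) F (hB m hm) (BF m hm).
exists (q.1 ++ q'.1, q.2 ++ q'.2); split.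
  case: Fq => F1 F2; case: Fq' => F1' F2'.
  by split => p /=; rewrite mem_cat => /orP[] h; [exact: F1 | exact: F1' | exact: F2 | exact: F2'].
move=> G [G1 G2] i; rewrite ltnS leq_eqVlt => /orP[/eqP -> | im].
  apply: hq'; split => p hp; [apply: G1 | apply: G2]; by rewrite /= mem_cat hp orbT.
apply: hq => //; split => p hp; [apply: G1 | apply: G2]; by rewrite /= mem_cat hp.
Qed.

Lemma L_meas (v w : R) (f : Ct v -> Ct w) :
  (forall p, measurable (f @^-1` Hb w p)) ->
  forall A, measurable A -> measurable (f @^-1` A).
Proof.
move=> hf.
have m1 : forall s : seq (rat * rat), measurable [set Z | forall p, p \in s -> ~ Hb w p (f Z)].
  elim=> [|p s IH].
    by have -> : [set Z | forall p, p \in [::] -> ~ Hb w p (f Z)] = setT by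
      apply/seteqP; split.
  have -> : [set Z | forall p', p' \in p :: s -> ~ Hb w p' (f Z)] =
      ~` (f @^-1` Hb w p) `&` [set Z | forall p, p \in s -> ~ Hb w p (f Z)].
    apply/seteqP; split => Z /=.
      by move=> h; split => [|p' hp']; apply: h; rewrite inE ?hp' ?orbT ?eqxx.
    by move=> [h1 h2] p'; rewrite inE => /orP[/eqP -> | /h2].
  by apply: measurableI => //; apply: measurableC.
have m2 : forall s : seq (rat * rat), measurable [set Z | forall p, p \in s -> Hb w p (f Z)].
  elim=> [|p s IH].
    by have -> : [set Z | forall p, p \in [::] -> Hb w p (f Z)] = setT by
      apply/seteqP; split.
  have -> : [set Z | forall p', p' \in p :: s -> Hb w p' (f Z)] =
      (f @^-1` Hb w p) `&` [set Z | forall p, p \in s -> Hb w p (f Z)].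
    apply/seteqP; split => Z /=.
      by move=> h; split => [|p' hp']; apply: h; rewrite inE ?hp' ?orbT ?eqxx.
    by move=> [h1 h2] p'; rewrite inE => /orP[/eqP -> | /h2].
  by apply: measurableI.
have mb : forall q, measurable (f @^-1` basic w q).
  by move=> q; exact: measurableI (m1 q.1) (m2 q.2).
have mf : measurable_fun setT f.
  apply: (@measurability _ _ _ _ setT f (fell_open w)) => //.
  move=> _ [Op hO <-]; rewrite setTI.
  pose Oq (n : nat) : set (Ct w) := if unpickle n is Some q then
     (if pselect (basic w q `<=` Op) then basic w q else set0) else set0.
  have -> : f @^-1` Op = \bigcup_n (f @^-1` Oq n).
    apply/seteqP; split => Z.
      move=> /= OZ; have [q [Fq qO]] := @approx w Op (f Z) hO OZ.
      exists (pickle q) => //; rewrite /Oq pickleK; case: pselect => //.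
    move=> [n _]; rewrite /Oq /=; case: (unpickle n) => // q.
    by case: pselect => // qO /qO.
  apply: bigcup_measurable => n _; rewrite /Oq; case: (unpickle n) => [q|].
    by case: pselect => h; [exact: mb | rewrite preimage_set0].
  by rewrite preimage_set0.
move=> A mA; have := mf measurableT A mA; by rewrite setTI.
Qed.

End Aux2.

Section Restr.
Context {R : realType}.

Lemma seg_closed (a b : R) : closed [set x : R | a <= x <= b].
Proof.
have -> : [set x : R | a <= x <= b] = `[a, b]%classic.
  by apply/seteqP; split => x; rewrite /= in_itv.
exact: itv_closed.
Qed.

Lemma oo_mem (a b x : R) : `]a, b[%classic x = (a < x < b).
Proof. by rewrite /= in_itv. Qed.

Lemma add_cont (a : R) : continuous (fun x : R => x + a).
Proof. move=> x; apply: cvgD; [exact: cvg_id | exact: cvg_cst]. Qed.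

Lemma restr0E (u1 u : R) (Z : Ct u) :
  cval (restr0 u1 u Z) = cval Z `&` [set x | 0 <= x <= u1].
Proof.
rewrite /restr0 mkCE //; split.
  exact: closedI (cvalP Z).1 (seg_closed _ _).
by move=> x [].
Qed.

Lemma restr1E (u1 u2 u : R) (Z : Ct u) : u <= u1 + u2 ->
  cval (restr1 u1 u2 u Z) = [set r - u1 | r in cval Z `&` [set x | u1 <= x <= u]].
Proof.
move=> hu; rewrite /restr1 mkCE //; split.
  have -> : [set r - u1 | r in cval Z `&` [set x | u1 <= x <= u]] =
      (fun y => y + u1) @^-1` (cval Z `&` [set x | u1 <= x <= u]).
    apply/seteqP; split => y /=.
      by move=> [r hr <-]; rewrite subrK.
    by move=> h; exists (y + u1) => //; rewrite addrK.
  move: (add_cont u1) => /continuous_closedP; apply.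
  exact: closedI (cvalP Z).1 (seg_closed _ _).
move=> _ [r [_ /andP[h1 h2]] <-] /=; apply/andP; split; first by rewrite subr_ge0.
by lra.
Qed.

Lemma restr0_meas (u1 u : R) A : measurable A -> measurable (restr0 u1 u @^-1` A).
Proof.
apply: L_meas => p.
have -> : restr0 u1 u @^-1` Hb u1 p =
   [set Z : Ct u | cval Z `&` [set x | 0 <= x <= u1] `&`
       `](ratr p.1 - ratr p.2), (ratr p.1 + ratr p.2)[ !=set0].
  by apply/seteqP; split => Z; rewrite /Hb /rball /= restr0E ball_itv.
exact: Io_meas (seg_closed _ _).
Qed.

Lemma restr1_meas (u1 u2 u : R) A : u <= u1 + u2 ->
  measurable A -> measurable (restr1 u1 u2 u @^-1` A).
Proof.
move=> hu; apply: L_meas => p.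
have -> : restr1 u1 u2 u @^-1` Hb u2 p =
   [set Z : Ct u | cval Z `&` [set x | u1 <= x <= u] `&`
       `](ratr p.1 - ratr p.2 + u1), (ratr p.1 + ratr p.2 + u1)[ !=set0].
  apply/seteqP; split => Z; rewrite /Hb /rball /= restr1E // ball_itv /=.
    move=> [_ [[r hr <-]]]; rewrite oo_mem => /andP[h1 h2].
    exists r; split => //; rewrite oo_mem; apply/andP; split; lra.
  move=> [r [hr]]; rewrite oo_mem => /andP[h1 h2].
  exists (r - u1); split; first by exists r.
  rewrite oo_mem; apply/andP; split; lra.
exact: Io_meas (seg_closed _ _).
Qed.

End Restr.

Section Prob.
Context {R : realType} {d : measure_display} {T : measurableType d}
  (mu : probability T R).

Definition pr (X : set T) : R := fine (mu X).

Lemma pr_fin X : measurable X -> mu X \is a fin_num.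
Proof. by move=> mX; exact: fin_num_measure. Qed.

Lemma pr_ge0 X : 0 <= pr X.
Proof. exact/fine_ge0/measure_ge0. Qed.

Lemma pr_le X Y : measurable X -> measurable Y -> X `<=` Y -> pr X <= pr Y.
Proof.
move=> mX mY XY; apply: fine_le; [exact: pr_fin | exact: pr_fin |].
by apply: le_measure => //; rewrite inE.
Qed.

Lemma pr_add X Y : measurable X -> measurable Y -> X `&` Y = set0 ->
  pr (X `|` Y) = pr X + pr Y.
Proof.
move=> mX mY XY; rewrite /pr measureU // fineD //; exact: pr_fin.
Qed.

Lemma pr_subadd X Y : measurable X -> measurable Y -> pr (X `|` Y) <= pr X + pr Y.
Proof.
move=> mX mY; rewrite /pr -fineD; try exact: pr_fin.
apply: fine_le; [apply: pr_fin; exact: measurableU | | exact: measureU2].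
by rewrite fin_numD !pr_fin.
Qed.

Lemma condPE E B : condP mu E B = pr (E `&` B) / pr E.
Proof. by []. Qed.

Lemma cond_diff (E P B : set T) :
  measurable E -> measurable P -> measurable B -> E `<=` P ->
  `|condP mu E B - condP mu P B| <= pr (P `\` E) / pr P.
Proof.
move=> mE mP mB EP; rewrite !condPE.
have mPE : measurable (P `\` E) by exact: measurableD.
have mEB : measurable (E `&` B) by exact: measurableI.
have mPEB : measurable ((P `\` E) `&` B) by exact: measurableI.
have hP : pr P = pr E + pr (P `\` E).
  rewrite -pr_add //.
    congr pr; apply/seteqP; split => x.
      by move=> Px; case: (pselect (E x)) => h; [left|right].
    by case => [/EP|[]].
  by apply/seteqP; split => // x [? []].
have hPB : pr (P `&` B) = pr (E `&` B) + pr ((P `\` E) `&` B).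
  rewrite -pr_add //.
    congr pr; apply/seteqP; split => x.
      by move=> [Px Bx]; case: (pselect (E x)) => h; [left|right].
    case=> [[Ex Bx]|[[Px _] Bx]] //; split => //; exact: EP.
  by apply/seteqP; split => // x [[? ?] [[? []]]].
have h1 : 0 <= pr (E `&` B) <= pr E.
  by rewrite pr_ge0 /=; apply: pr_le => // x [].
have h2 : 0 <= pr ((P `\` E) `&` B) <= pr (P `\` E).
  by rewrite pr_ge0 /=; apply: pr_le => // x [].
rewrite hPB hP.
move: h1 h2; set e := pr E; set eb := pr (E `&` B); set db := pr ((P `\` E) `&` B);
  set dl := pr (P `\` E) => /andP[h1 h1'] /andP[h2 h2'].
have [e0|] := eqVneq e 0.
  have -> : eb = 0 by apply/eqP; rewrite eq_le h1 andbT -e0.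
  rewrite e0 !mul0r !add0r normrN.
  have dl0 : 0 <= dl by lra.
  rewrite ger0_norm; last exact: divr_ge0.
  by apply: ler_pM => //; rewrite invr_ge0.
move=> en0; have ep : 0 < e by rewrite lt_neqAle eq_sym en0 (le_trans h1 h1').
have pp : 0 < e + dl by lra.
set x := eb / e.
have x0 : 0 <= x by apply: divr_ge0 => //; lra.
have x1 : x <= 1 by rewrite ler_pdivrMr // mul1r.
have hx : x * e = eb by rewrite /x mulfVK // gt_eqF.
set y := (eb + db) / (e + dl); set z := dl / (e + dl).
have hy : y * (e + dl) = eb + db by rewrite /y mulfVK // gt_eqF.
have hz : z * (e + dl) = dl by rewrite /z mulfVK // gt_eqF.
rewrite ler_norml; apply/andP; split; nra.
Qed.

End Prob.


Section Events.
Context {R : realType}.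

Lemma inf_in (A : set R) : A !=set0 -> has_lbound A -> closed A -> A (inf A).
Proof.
move=> h0 hl hc; apply: (itv_closed_infimums h0 hc); split.
  by move=> x Ax; exact: ge_inf.
by move=> x xl; exact: lb_le_inf.
Qed.

Lemma nzP (T : Type) (A : set T) : A !=set0 <-> ~ (A = set0).
Proof. by split => [/set0P/eqP | h]; [|apply/set0P/eqP]. Qed.

Variable u : R.

Lemma lbZ (Z : Ct u) : has_lbound (cval Z).
Proof. by exists 0 => x /cval_sub /andP[]. Qed.

Lemma ubZ (Z : Ct u) : has_ubound (cval Z).
Proof. by exists u => x /cval_sub /andP[]. Qed.

Lemma anchorE {Z : Ct u} : cval Z !=set0 -> anchor Z = inf (cval Z).
Proof. by move=> /nzP h; rewrite /anchor; case: pselect. Qed.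

Lemma spreadE {Z : Ct u} : cval Z !=set0 -> spread Z = sup (cval Z) - inf (cval Z).
Proof. by move=> /nzP h; rewrite /spread; case: pselect. Qed.

Lemma inf_inZ {Z : Ct u} : cval Z !=set0 -> cval Z (inf (cval Z)).
Proof. by move=> h; apply: inf_in => //; [exact: lbZ | exact: (cvalP Z).1]. Qed.

Lemma N_meas : measurable (nonemptyC u).
Proof.
have -> : nonemptyC u = ~` [set Z : Ct u | cval Z `&` setT = set0].
  by apply/seteqP; split => Z /=; rewrite setIT => /nzP.
by apply: measurableC; apply: Gc_meas; exact: closedT.
Qed.

Lemma Gc_meas' (K : set R) : closed K ->
  measurable [set Z : Ct u | cval Z `&` K !=set0].
Proof.
move=> cK; have -> : [set Z : Ct u | cval Z `&` K !=set0] =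
  ~` [set Z : Ct u | cval Z `&` K = set0].
  by apply/seteqP; split => Z /= /nzP.
by apply: measurableC; apply: Gc_meas.
Qed.

Lemma W_meas (a b : R) : 0 <= b ->
  measurable (nonemptyC u `&` anchor @^-1` `[a, b]%classic).
Proof.
move=> b0.
have -> : nonemptyC u `&` anchor @^-1` `[a, b]%classic =
  [set Z : Ct u | cval Z `&` [set x | 0 <= x <= b] !=set0] `&`
  ~` [set Z : Ct u | cval Z `&` setT `&` `]-1, a[ !=set0].
  apply/seteqP; split => Z /=.
    move=> [hN]; rewrite anchorE // /= in_itv /= => /andP[h1 h2]; split.
      exists (inf (cval Z)); split; first exact: inf_inZ.
      by have /cval_sub /andP[] := inf_inZ hN; rewrite /= h2 andbT.
    move=> [x [[Zx _]]]; rewrite oo_mem => /andP[_ xa].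
    have := ge_inf (lbZ Z) Zx; lra.
  move=> [[x [Zx /andP[x0 xb]]] h].
  have hN : cval Z !=set0 by exists x.
  split => //; rewrite anchorE // /= in_itv /=; apply/andP; split.
    apply: lb_le_inf => // z Zz; rewrite leNgt; apply/negP => za; apply: h.
    exists z; split => //; rewrite oo_mem za andbT.
    by have /cval_sub /andP[z0 _] := Zz; lra.
  by apply: le_trans (ge_inf (lbZ Z) Zx) xb.
apply: measurableI; first by apply: Gc_meas'; exact: seg_closed.
by apply: measurableC; apply: Io_meas; exact: closedT.
Qed.

Lemma NS_meas (c : R) :
  measurable (nonemptyC u `&` [set Z : Ct u | c <= spread Z]).
Proof.
pose V (qr : rat * rat) : set (Ct u) :=
  ~` [set Z : Ct u | cval Z `&` setT `&` `]-1, ratr qr.1[ !=set0] `&`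
  ~` [set Z : Ct u | cval Z `&` setT `&`
        `](ratr qr.1 + ratr qr.2), Num.max (ratr qr.1 + ratr qr.2) u + 1[ !=set0].
pose Vn (n : nat) : set (Ct u) := if unpickle n is Some qr then
  (if ratr qr.2 < c then V qr else set0) else set0.
have -> : nonemptyC u `&` [set Z : Ct u | c <= spread Z] =
  nonemptyC u `&` ~` \bigcup_n Vn n.
  apply/seteqP; split => Z [hN] /=.
    move=> hc; split => // -[n _]; rewrite /Vn; case: (unpickle n) => // -[q r] /=.
    case: ifP => // rc [h1 h2].
    have lq : lbound (cval Z) (ratr q).
      move=> z Zz; rewrite leNgt; apply/negP => zq; apply: h1.
      exists z; split => //; rewrite oo_mem zq andbT.
      by have /cval_sub /andP[z0 _] := Zz; clear -z0; lra.
    have uq : ubound (cval Z) (ratr q + ratr r).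
      move=> z Zz; rewrite leNgt; apply/negP => zq; apply: h2.
      exists z; split => //; rewrite oo_mem zq /=.
      have /cval_sub /andP[_ zu] := Zz.
      have : u <= Num.max (ratr q + ratr r) u by rewrite le_max lexx orbT.
      move: zu zq; move: (Num.max (ratr q + ratr r) u) => m; clear; lra.
    have i1 := lb_le_inf hN lq.
    have s1 := ge_sup hN uq.
    move: hc i1 s1 rc; rewrite spreadE //.
    move: (ratr q : R) (ratr r : R) => a b; clear; lra.
  move=> h; split => //; rewrite leNgt; apply/negP; rewrite spreadE // => hs.
  have [r hr] := rat_in_itvoo hs; move: hr; rewrite in_itv /= => /andP[r1 r2].
  have hlt : sup (cval Z) - ratr r < inf (cval Z).
    move: r1; move: (ratr r : R) => b; clear; lra.
  have [q hq] := rat_in_itvoo hlt.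
  move: hq; rewrite in_itv /= => /andP[q1 q2].
  apply: h; exists (pickle (q, r)); first by [].
  rewrite /Vn (pickleK (q, r)) r2; split.
      move=> [z [[Zz _]]]; rewrite oo_mem => /andP[_ zq].
      have := ge_inf (lbZ Z) Zz; move: zq; rewrite [(q, r).1]/= => zq. lra.
    move=> [z [[Zz _]]]; rewrite oo_mem => /andP[zq _].
    have := ub_le_sup (ubZ Z) Zz; move: zq; rewrite [(q, r).1]/= [(q, r).2]/= => zq. lra.
apply: measurableI; first exact: N_meas.
apply: measurableC; apply: bigcup_measurable => n _; rewrite /Vn.
case: (unpickle n) => // qr; case: ifP => // _.
by apply: measurableI; apply: measurableC; apply: Io_meas; exact: closedT.
Qed.

End Events.

Section Sets2.
Context {R : realType}.
Variables (u1 u : R).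

Lemma P0E : [set Z : Ct u | cval (restr0 u1 u Z) !=set0] =
  [set Z : Ct u | cval Z `&` [set x | 0 <= x <= u1] !=set0].
Proof. by apply/seteqP; split => Z /=; rewrite restr0E. Qed.

Lemma P0_meas : measurable [set Z : Ct u | cval (restr0 u1 u Z) !=set0].
Proof. by rewrite P0E; apply: Gc_meas'; exact: seg_closed. Qed.

Lemma P0_anchor : 0 <= u1 ->
  [set Z : Ct u | cval (restr0 u1 u Z) !=set0] =
  nonemptyC u `&` anchor @^-1` `[0, u1]%classic.
Proof.
move=> u10; rewrite P0E; apply/seteqP; split => Z /=.
  move=> [x [Zx /andP[x0 xu]]].
  have hN : cval Z !=set0 by exists x.
  split => //; rewrite anchorE // in_itv /=; apply/andP; split.
    by apply: lb_le_inf => // z /cval_sub /andP[].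
  by have := ge_inf (lbZ _ Z) Zx; lra.
move=> [hN]; rewrite anchorE // in_itv /= => /andP[h1 h2].
by exists (inf (cval Z)); split => //; [exact: inf_inZ | apply/andP].
Qed.

Lemma E10_meas : measurable (E10 u1 u).
Proof.
have -> : E10 u1 u = [set Z : Ct u | cval Z `&` [set x | 0 <= x <= u1] !=set0] `&`
   ~` [set Z : Ct u | cval Z `&` setT `&` `]u1, u + 1[ !=set0].
  apply/seteqP; split => Z /= [h1 h2]; split => //.
    move=> [x [[Zx _]]]; rewrite oo_mem => /andP[x1 x2].
    have : (cval Z `&` [set x | u1 < x <= u]) x.
      by split => //=; rewrite x1 /=; have /andP[] := cval_sub Zx.
    by rewrite h2.
  apply/seteqP; split => // x [Zx /andP[x1 x2]]; apply: h2.
  by exists x; split => //; rewrite oo_mem x1 /=; lra.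
apply: measurableI; first by apply: Gc_meas'; exact: seg_closed.
by apply: measurableC; apply: Io_meas; exact: closedT.
Qed.

Lemma E10_sub : E10 u1 u `<=` [set Z : Ct u | cval (restr0 u1 u Z) !=set0].
Proof. by rewrite P0E => Z []. Qed.

Variable u2 : R.
Hypothesis hu : u <= u1 + u2.

Lemma P1E : [set Z : Ct u | cval (restr1 u1 u2 u Z) !=set0] =
  [set Z : Ct u | cval Z `&` [set x | u1 <= x <= u] !=set0].
Proof.
apply/seteqP; split => Z /=; rewrite restr1E //.
  by move=> [_ [r hr _]]; exists r.
by move=> [r hr]; exists (r - u1); exists r.
Qed.

Lemma P1_meas : measurable [set Z : Ct u | cval (restr1 u1 u2 u Z) !=set0].
Proof. by rewrite P1E; apply: Gc_meas'; exact: seg_closed. Qed.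

Lemma E01_meas : measurable (E01 u1 u).
Proof.
apply: measurableI; first by apply: Gc_meas; exact: seg_closed.
by apply: Gc_meas'; exact: seg_closed.
Qed.

Lemma E01_sub : E01 u1 u `<=` [set Z : Ct u | cval (restr1 u1 u2 u Z) !=set0].
Proof. by rewrite P1E => Z []. Qed.

Lemma X1E : 0 <= u1 ->
  nonemptyC u `&` anchor @^-1` `]u1, u]%classic =
  nonemptyC u `&` [set Z : Ct u | cval Z `&` [set x | 0 <= x <= u1] = set0].
Proof.
move=> u10; apply/seteqP; split => Z /= [hN].
  rewrite anchorE // in_itv /= => /andP[h1 h2]; split => //.
  apply/seteqP; split => // x [Zx /andP[_ xu]].
  by have := ge_inf (lbZ _ Z) Zx; lra.
move=> h; split => //; rewrite anchorE // in_itv /=.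
have Zi := inf_inZ _ hN; have /andP[i0 iu] := cval_sub Zi.
rewrite iu andbT ltNge; apply/negP => iu1.
have : (cval Z `&` [set x | 0 <= x <= u1]) (inf (cval Z)) by split => //; apply/andP.
by rewrite h.
Qed.

Lemma X1_meas : 0 <= u1 -> measurable (nonemptyC u `&` anchor @^-1` `]u1, u]%classic).
Proof.
move=> u10; rewrite X1E //; apply: measurableI; first exact: N_meas.
by apply: Gc_meas; exact: seg_closed.
Qed.

Lemma X1_sub : 0 <= u1 -> nonemptyC u `&` anchor @^-1` `]u1, u]%classic `<=`
  [set Z : Ct u | cval (restr1 u1 u2 u Z) !=set0].
Proof.
move=> u10; rewrite P1E => Z [hN]; rewrite /= anchorE // in_itv /= => /andP[h1 h2].
by exists (inf (cval Z)); split; [exact: inf_inZ | rewrite /= h2 andbT ltW].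
Qed.

Lemma cover_WS (c : R) (Z : Ct u) x y : cval Z x -> x <= u1 -> cval Z y -> u1 <= y ->
  (nonemptyC u `&` anchor @^-1` `[u1 - c, u1]%classic `|`
   nonemptyC u `&` [set Z : Ct u | c <= spread Z]) Z.
Proof.
move=> Zx xu Zy uy; have hN : cval Z !=set0 by exists x.
have hi := ge_inf (lbZ _ Z) Zx; have hi' := ge_inf (lbZ _ Z) Zy.
have hs := ub_le_sup (ubZ _ Z) Zy.
have [ci|ic] := leP (u1 - c) (inf (cval Z)).
  left; split => //; rewrite /= anchorE // in_itv /= ci /=; lra.
right; split => //; rewrite /= spreadE //; lra.
Qed.

Lemma D0_sub (c : R) : [set Z : Ct u | cval (restr0 u1 u Z) !=set0] `\` E10 u1 u `<=`
  nonemptyC u `&` anchor @^-1` `[u1 - c, u1]%classic `|`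
   nonemptyC u `&` [set Z : Ct u | c <= spread Z].
Proof.
rewrite P0E => Z [/= [x [Zx /andP[x0 xu]]] nE].
have : ~ (cval Z `&` [set x | u1 < x <= u] = set0).
  by move=> h; apply: nE; split => //; exists x; split => //; apply/andP.
move/nzP => [y [Zy /andP[y1 _]]].
exact: (@cover_WS c Z x y Zx xu Zy (ltW y1)).
Qed.

Lemma D1_sub (c : R) : [set Z : Ct u | cval (restr1 u1 u2 u Z) !=set0] `\` E01 u1 u `<=`
  nonemptyC u `&` anchor @^-1` `[u1 - c, u1]%classic `|`
   nonemptyC u `&` [set Z : Ct u | c <= spread Z].
Proof.
rewrite P1E => Z [/= [y [Zy /andP[y1 y2]]] nE].
have : ~ (cval Z `&` [set x | 0 <= x <= u1] = set0).
  by move=> h; apply: nE; split => //; exists y; split => //; apply/andP.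
move/nzP => [x [Zx /andP[_ xu]]].
exact: (@cover_WS c Z x y Zx xu Zy y1).
Qed.

End Sets2.

Section Core.
Context {R : realType}.

Lemma oo_set (a b : R) : [set x : R | a < x < b] = `]a, b[%classic.
Proof. by apply/seteqP; split => x; rewrite /= in_itv. Qed.

Lemma div_bound (a b pN u v : R) : 0 <= a -> a <= 2 * pN * u -> 0 < pN -> 0 < v -> 0 < u ->
  pN * (v / u) <= b -> a / b <= 2 * u ^+ 2 / v.
Proof.
move=> a0 ha pN0 v0 u0 hb.
have m0 : 0 < v / u by apply: divr_gt0.
have b0 : 0 < b by apply: lt_le_trans hb; apply: mulr_gt0.
rewrite ler_pdivrMr //.
have k0 : 0 <= 2 * u ^+ 2 / v by apply: divr_ge0; [rewrite mulr_ge0 // sqr_ge0 | exact: ltW].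
apply: (le_trans ha); apply: le_trans (ler_wpM2l k0 hb).
have -> : 2 * u ^+ 2 / v * (pN * (v / u)) = 2 * pN * u.
  by field; rewrite ?gt_eqF.
by [].
Qed.

Lemma leb_le (B : set R) (X : set R) (a b : R) : measurable X -> a <= b ->
   B = `[a, b]%classic -> fine (lebesgue_measure (B `&` X)) <= b - a.
Proof.
move=> mX ab ->.
have h1 : (lebesgue_measure (`[a, b]%classic `&` X) <= (b - a)%:E)%E.
  have -> : (b - a)%:E = lebesgue_measure (`[a, b]%classic : set R).
    rewrite lebesgue_measure_itv /=; case: ltP => h.
      by rewrite -EFinB.
    move: h; rewrite lee_fin => h.
    have -> : b = a by apply/le_anti; rewrite ab h.
    by rewrite subrr.
  apply: le_measure.
  - by rewrite inE; apply: measurableI => //; exact: measurable_itv.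
  - by rewrite inE; exact: measurable_itv.
  - by move=> x [].
have h0 : (0 <= lebesgue_measure (`[a, b]%classic `&` X))%E by exact: measure_ge0.
rewrite -lee_fin fineK //.
by rewrite ge0_fin_numE // (le_lt_trans h1) // ltry.
Qed.


Lemma core (nu : forall t : R, probability (Ct t) R) (u1 u2 u : R) :
  0 < u1 -> 0 < u2 -> u = u1 + u2 ->
  (forall B : set R, measurable B ->
     condP (nu u) (nonemptyC u) (@anchor R u @^-1` B) =
     fine (lebesgue_measure (B `&` [set x : R | 0 < x < u])) / u) ->
  condP (nu u) (nonemptyC u) [set Z : Ct u | u ^+ 2 <= spread Z] <= u ->
  TV (cond_law (nu u) (E10 u1 u) (restr0 u1 u))
     (cond_law (nu u) [set Z : Ct u | cval (restr0 u1 u Z) !=set0] (restr0 u1 u))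
    <= 2 * u ^+ 2 / u1 /\
  TV (cond_law (nu u) (E01 u1 u) (restr1 u1 u2 u))
     (cond_law (nu u) [set Z : Ct u | cval (restr1 u1 u2 u Z) !=set0] (restr1 u1 u2 u))
    <= 2 * u ^+ 2 / u2.
Proof.
move=> u1p u2p uE HA HD.
have up : 0 < u by lra.
have hu : u <= u1 + u2 by lra.
set mu := nu u.
set N := nonemptyC u.
have mN : measurable N := N_meas u.
have pN : 0 < pr mu N.
  have := HA setT measurableT; rewrite condPE setTI oo_set.
  rewrite lebesgue_measure_itv /= lte_fin up /= subr0 divff ?gt_eqF //.
  rewrite preimage_setT setIT => h.
  rewrite lt_neqAle pr_ge0 andbT eq_sym; apply/eqP => h0; move: h.
  by rewrite h0 invr0 mulr0 => /eqP; rewrite eq_sym oner_eq0.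
have HA' : forall B, measurable B -> pr mu (N `&` anchor @^-1` B) =
    pr mu N * (fine (lebesgue_measure (B `&` [set x : R | 0 < x < u])) / u).
  by move=> B mB; rewrite -HA // condPE mulrC mulfVK // (gt_eqF pN).
set W := N `&` anchor @^-1` `[u1 - u ^+ 2, u1]%classic.
set S := N `&` [set Z : Ct u | u ^+ 2 <= spread Z].
have mW : measurable W by apply: W_meas; exact: ltW.
have mS : measurable S := NS_meas u (u ^+ 2).
have pW : pr mu W <= pr mu N * u.
  rewrite /W HA'; last exact: measurable_itv.
  apply: ler_wpM2l; first exact: pr_ge0.
  rewrite ler_pdivrMr // -expr2.
  have := @leb_le `[u1 - u ^+ 2, u1]%classic [set x : R | 0 < x < u] (u1 - u ^+ 2) u1.
  rewrite oo_set; move=> /(_ (measurable_itv _)) h.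
  have : u1 - u ^+ 2 <= u1 by rewrite gerBl; exact: sqr_ge0.
  move=> /h /(_ erefl); have -> : u1 - (u1 - u ^+ 2) = u ^+ 2 by ring.
  by rewrite expr2.
have pS : pr mu S <= pr mu N * u.
  by move: HD; rewrite condPE ler_pdivrMr // mulrC.
have pWS : pr mu (W `|` S) <= 2 * pr mu N * u.
  apply: le_trans (pr_subadd mu _ _ mW mS) _; lra.
have mWS : measurable (W `|` S) by exact: measurableU.
split.
- set P := [set Z : Ct u | cval (restr0 u1 u Z) !=set0].
  have mP : measurable P := P0_meas u1 u.
  have mE := E10_meas u1 u.
  have mD : measurable (P `\` E10 u1 u) by exact: measurableD.
  have pD : pr mu (P `\` E10 u1 u) <= 2 * pr mu N * u.
    apply: le_trans pWS; apply: pr_le => //; exact: D0_sub.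
  have pP : pr mu N * (u1 / u) <= pr mu P.
    rewrite /P P0_anchor; last exact: ltW.
    rewrite HA'; last exact: measurable_itv.
    have -> : `[0, u1]%classic `&` [set x : R | 0 < x < u] = `]0, u1]%classic.
      apply/seteqP; split => x; rewrite /= !in_itv /=; lra.
    by rewrite lebesgue_measure_itv /= lte_fin u1p /= subr0.
  rewrite /TV; apply: ge_sup.
    by exists (`|cond_law mu (E10 u1 u) (restr0 u1 u) setT -
       cond_law mu P (restr0 u1 u) setT|); exists setT.
  move=> _ [A mA <-]; rewrite /cond_law.
  apply: le_trans (cond_diff mu _ _ _ mE mP (restr0_meas u1 u A mA) (E10_sub u1 u)) _.
  by apply: (div_bound _ _ (pr mu N) u) => //; exact: (pr_ge0 mu _).
- set P := [set Z : Ct u | cval (restr1 u1 u2 u Z) !=set0].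
  have mP : measurable P := P1_meas u1 u u2 hu.
  have mE := E01_meas u1 u.
  have mD : measurable (P `\` E01 u1 u) by exact: measurableD.
  have pD : pr mu (P `\` E01 u1 u) <= 2 * pr mu N * u.
    apply: le_trans pWS; apply: pr_le => //; exact: D1_sub.
  have pP : pr mu N * (u2 / u) <= pr mu P.
    apply: le_trans (pr_le mu _ _ (X1_meas u1 u (ltW u1p)) mP (X1_sub u1 u u2 hu (ltW u1p))).
    rewrite HA'; last exact: measurable_itv.
    have -> : `]u1, u]%classic `&` [set x : R | 0 < x < u] = `]u1, u[%classic.
      apply/seteqP; split => x; rewrite /= !in_itv /=; lra.
    have u1u : u1 < u by lra.
    rewrite lebesgue_measure_itv /= lte_fin u1u /=.
    by have -> : u - u1 = u2 by lra.
  rewrite /TV; apply: ge_sup.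
    by exists (`|cond_law mu (E01 u1 u) (restr1 u1 u2 u) setT -
       cond_law mu P (restr1 u1 u2 u) setT|); exists setT.
  move=> _ [A mA <-]; rewrite /cond_law.
  apply: le_trans (cond_diff mu _ _ _ mE mP (restr1_meas u1 u2 u A hu mA) (E01_sub u1 u u2 hu)) _.
  by apply: (div_bound _ _ (pr mu N) u) => //; exact: (pr_ge0 mu _).
Qed.

End Core.

Theorem lemma4p25 (R : realType) (nu : forall t : R, probability (Ct t) R)
  (hnu : measurable_factorizing_family nu) (s t : R) (hs : 0 < s) (ht : 0 < t)
  (HA : exists u0 : R, 0 < u0 /\ forall u : R, 0 < u < u0 ->
     forall B : set R, measurable B ->
       condP (nu u) (nonemptyC u) (@anchor R u @^-1` B) =
       fine (lebesgue_measure (B `&` [set x : R | 0 < x < u])) / u)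
  (HD : exists u0 : R, 0 < u0 /\ forall u : R, 0 < u < u0 ->
     condP (nu u) (nonemptyC u) [set Z : Ct u | u ^+ 2 <= spread Z] <= u) :
  exists C : R, exists l0 : R, 0 < l0 /\ forall l : R, 0 < l < l0 ->
    let u := l * (s + t) in let u1 := l * s in let u2 := l * t in
    TV (cond_law (nu u) (E10 u1 u) (restr0 u1 u))
       (cond_law (nu u) [set Z : Ct u | cval (restr0 u1 u Z) !=set0] (restr0 u1 u))
      <= C * u /\
    TV (cond_law (nu u) (E01 u1 u) (restr1 u1 u2 u))
       (cond_law (nu u) [set Z : Ct u | cval (restr1 u1 u2 u Z) !=set0] (restr1 u1 u2 u))
      <= C * u.
Proof.
case: HA => a [a0 HA]; case: HD => b [b0 HD].
have st0 : 0 < s + t by lra.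
exists (2 * (s + t) / s + 2 * (s + t) / t), (Num.min a b / (s + t)); split.
  by apply: divr_gt0 => //; rewrite lt_min a0 b0.
move=> l /andP[l0 hl]; cbv zeta.
have ua : l * (s + t) < Num.min a b by rewrite -ltr_pdivlMr.
move: ua; rewrite lt_min => /andP[ua ub].
have up : 0 < l * (s + t) by apply: mulr_gt0.
have u1p : 0 < l * s by apply: mulr_gt0.
have u2p : 0 < l * t by apply: mulr_gt0.
have e1 : l * (s + t) = l * s + l * t by ring.
have e2 : 0 < l * (s + t) < a by rewrite up ua.
have e3 : 0 < l * (s + t) < b by rewrite up ub.
have [h1 h2] := core nu (l * s) (l * t) (l * (s + t)) u1p u2p e1 (HA _ e2) (HD _ e3).
  have k1 : 2 * (l * (s + t)) ^+ 2 / (l * s) = 2 * (s + t) / s * (l * (s + t)).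
    by field; rewrite ?gt_eqF.
  have k2 : 2 * (l * (s + t)) ^+ 2 / (l * t) = 2 * (s + t) / t * (l * (s + t)).
    by field; rewrite ?gt_eqF.
  have c1 : 0 <= 2 * (s + t) / s * (l * (s + t)).
    by apply: mulr_ge0; [apply: divr_ge0; lra | lra].
  have c2 : 0 <= 2 * (s + t) / t * (l * (s + t)).
    by apply: mulr_ge0; [apply: divr_ge0; lra | lra].
  rewrite mulrDl; split.
    by apply: (le_trans h1); rewrite k1 lerDl.
  by apply: (le_trans h2); rewrite k2 lerDr.
Qed.
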